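(* Let $p$ be a prime with $p\equiv 1\pmod 4$, $T=A_p$, $G\in\{A_p,S_p\}$, and let $H=\mathrm{AGL}_1(p)\cap G$ be a maximal subgroup of $G$, with $G$ acting on the cosets of $H$, of degree $n=(p-2)!$. Then $$\mathrm{ifix}(T)=\frac{2^{(p-1)/2}\left(\frac{p-1}{2}\right)!}{p-1},$$ and $1\le \mathrm{ifix}(T)\le n^{1/2}$. In particular there are infinitely many almost simple primitive groups with $1\le \mathrm{ifix}(T)\le n^{1/2}$.
   Context: $\mathrm{AGL}_1(p)$ acts on $\mathbb{F}_p$ by affine maps, embedding it in $S_p$. $\mathrm{ifix}(T)=\max\{\mathrm{fix}(t): t\in T \text{ an involution}\}$, where $\mathrm{fix}(t)$ is the number of fixed points of $t$ on the coset space. *)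

(* Defs.v *)
From mathcomp Require Import all_boot all_order all_algebra all_fingroup all_solvable.
Set Implicit Arguments. Unset Strict Implicit. Unset Printing Implicit Defensive.
Import GRing.Theory.
Local Open Scope group_scope.

Definition AGL1 (p : nat) : {set {perm 'F_p}} :=
  [set s : {perm 'F_p} | [exists a : 'F_p, exists b : 'F_p,
      (a != 0)%R && [forall x, s x == (a * x + b)%R]]].

Definition cfix (gT : finGroupType) (H G : {set gT}) (t : gT) : nat :=
  #|[set C in rcosets H G | C :* t == C]|.

(* ifix(T) = max of fix(t) over involutions t of T (0 if there is none) *)
Definition ifix (gT : finGroupType) (H G T : {set gT}) : nat :=
  \max_(t in T | #[t] == 2) cfix H G t.

(* Main.v *)
Require Import Defs.
From mathcomp Require Import all_boot all_order all_algebra all_fingroup all_solvable.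
From mathcomp Require Import finfield ring zify.
Set Implicit Arguments. Unset Strict Implicit. Unset Printing Implicit Defensive.
Import GRing.Theory.
Local Open Scope group_scope.

Fixpoint gF (m : nat) : nat :=
  match m with 0 => 1 | 1 => 0 | m'.+2 => (m'.+1 * gF m')%N end.

Lemma gF_rec m : 0 < m -> gF m = (m.-1 * gF m.-2)%N.
Proof. by case: m => [|[|m]]. Qed.

Section Fon.
Variable T : finType.
Implicit Types (A : {set T}) (s u g : {perm T}).

Definition Fon A : {set {perm T}} :=
  [set s : {perm T} | [forall x, if x \in A then (s x != x) && (s (s x) == x) else s x == x]].

Lemma FonP A s : reflect (forall x, if x \in A then (s x != x) && (s (s x) == x) else s x == x)
  (s \in Fon A).
Proof. rewrite inE; exact: forallP. Qed.

Lemma Fon_in A s x : s \in Fon A -> x \in A -> [/\ s x != x, s (s x) = x & s x \in A].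
Proof.
move/FonP=> H xA; have := H x; rewrite xA => /andP[h1 /eqP h2]; split => //.
have := H (s x); case: ifP => // _ /eqP e; by move: h1; rewrite -{1}h2 e h2 eqxx.
Qed.

Lemma Fon_out A s x : s \in Fon A -> x \notin A -> s x = x.
Proof. by move/FonP=> H /negbTE xA; have := H x; rewrite xA => /eqP. Qed.

Lemma Fon_step A s a : s \in Fon A -> a \in A ->
  s * tperm a (s a) \in Fon (A :\ a :\ s a).
Proof.
move=> sF aA; have [sa1 sa2 saA] := Fon_in sF aA.
apply/FonP => x; rewrite permM !inE.
have [->|xb] := eqVneq x (s a); first by rewrite sa2 tpermL eqxx.
have [->|xa] := eqVneq x a; first by rewrite tpermR eqxx.
have sxa : s x != a by rewrite -{1}sa2 (inj_eq perm_inj).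
have sxb : s x != s a by rewrite (inj_eq perm_inj).
rewrite tpermD 1?eq_sym //=.
case xA: (x \in A).
  have [h1 h2 _] := Fon_in sF xA.
  by rewrite permM h2 tpermD 1?(eq_sym a) 1?(eq_sym (s a)) // eq_sym h1 eqxx.
by rewrite (Fon_out sF) ?xA // eqxx.
Qed.

Lemma Fon_unstep A s a b : s \in Fon (A :\ a :\ b) -> a \in A -> b \in A -> a != b ->
  s * tperm a b \in Fon A.
Proof.
move=> sF aA bA ab.
have sa : s a = a by apply: (Fon_out sF); rewrite !inE eqxx andbF.
have sb : s b = b by apply: (Fon_out sF); rewrite !inE eqxx.
apply/FonP => x; rewrite !permM.
have [->|xa] := eqVneq x a; first by rewrite aA sa tpermL sb tpermR eq_sym ab eqxx.
have [->|xb] := eqVneq x b; first by rewrite bA sb tpermR sa tpermL ab eqxx.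
have xA' : (x \in A :\ a :\ b) = (x \in A) by rewrite !inE xa xb.
have sxa : s x != a by rewrite -sa (inj_eq perm_inj).
have sxb : s x != b by rewrite -sb (inj_eq perm_inj).
rewrite (@tpermD _ a b (s x)) 1?(eq_sym a) 1?(eq_sym b) //.
case xA: (x \in A).
  have [h1 h2 _] := Fon_in sF (etrans xA' xA).
  by rewrite h1 h2 tpermD 1?(eq_sym a) 1?(eq_sym b) // eqxx.
by rewrite (Fon_out sF) ?xA' ?xA // tpermD 1?(eq_sym a) 1?(eq_sym b) // eqxx.
Qed.

Lemma Fon0 : Fon set0 = [set 1].
Proof.
apply/setP=> s; rewrite in_set1; apply/idP/eqP => [sF|->].
  by apply/permP=> x; rewrite perm1 (Fon_out sF) ?inE.
by apply/FonP=> x; rewrite inE perm1 eqxx.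
Qed.

Lemma card_Fon_ab A a b : a \in A -> b \in A :\ a ->
  #|[set s in Fon A | s a == b]| = #|Fon (A :\ a :\ b)|.
Proof.
move=> aA; rewrite !inE => /andP[ba bA].
apply/eqP; rewrite eqn_leq; apply/andP; split.
  rewrite -(card_imset _ (@mulIg _ (tperm a b))); apply: subset_leq_card.
  apply/subsetP=> y /imsetP[s]; rewrite inE => /andP[sF /eqP sab] ->.
  by rewrite -sab Fon_step.
rewrite -(card_imset _ (@mulIg _ (tperm a b))); apply: subset_leq_card.
apply/subsetP=> y /imsetP[s sF ->]; rewrite inE Fon_unstep // 1?eq_sym //=.
by rewrite permM (Fon_out sF) ?tpermL // !inE eqxx andbF.
Qed.

Lemma card_fiber (aT rT : finType) (X : {set aT}) (B : {set rT}) (f : aT -> rT) :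
  {in X, forall x, f x \in B} -> #|X| = (\sum_(b in B) #|[set x in X | f x == b]|)%N.
Proof.
move=> fB; rewrite -sum1_card (partition_big f (mem B)) //=.
apply: eq_bigr => b _; rewrite -sum1_card; apply: eq_bigl => x; by rewrite inE.
Qed.


Lemma cardsD1_in A x : x \in A -> #|A :\ x| = #|A|.-1.
Proof. by move=> xA; rewrite (cardsD1 x A) xA. Qed.

Lemma card_Fon A : #|Fon A| = gF #|A|.
Proof.
move: {2}#|A| (leqnn #|A|) => m; elim: m A => [|m IH] A.
  rewrite leqn0 => /eqP/cards0_eq ->; by rewrite Fon0 cards1 cards0.
rewrite leq_eqVlt ltnS => /orP[/eqP Am|]; last exact: IH.
have [a aA] : exists a, a \in A by apply/set0Pn; rewrite -card_gt0 Am.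
rewrite (@card_fiber _ _ _ (A :\ a) (fun s => s a)); last first.
  by move=> s sF; have [h1 _ h3] := Fon_in sF aA; rewrite !inE h1 h3.
rewrite (eq_bigr (fun _ => gF m.-1)); last first.
  move=> b bA; rewrite card_Fon_ab // IH.
    by rewrite (cardsD1_in bA) (cardsD1_in aA) Am.
  by rewrite (cardsD1_in bA) (cardsD1_in aA) Am /= leq_pred.
rewrite sum_nat_const (cardsD1_in aA) Am /=; by case: (m) {IH Am}.
Qed.

Lemma odd_Fon A s : s \in Fon A -> odd_perm s = odd #|A|./2.
Proof.
move: {2}#|A| (leqnn #|A|) => m; elim: m A s => [|m IH] A s.
  rewrite leqn0 => /eqP/cards0_eq ->; rewrite Fon0 inE => /eqP ->.
  by rewrite odd_perm1 cards0.
rewrite leq_eqVlt ltnS => /orP[/eqP Am|]; last exact: IH.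
move=> sF.
have [a aA] : exists a, a \in A by apply/set0Pn; rewrite -card_gt0 Am.
have [h1 h2 h3] := Fon_in sF aA.
have s'F := Fon_step sF aA.
have e : s = (s * tperm a (s a)) * tperm a (s a) by rewrite -mulgA tperm2 mulg1.
have bA : s a \in A :\ a by rewrite !inE h1 h3.
have cA : #|A :\ a :\ s a| = m.-1 by rewrite (cardsD1_in bA) (cardsD1_in aA) Am.
rewrite e odd_permM odd_tperm eq_sym h1 (IH _ _ _ s'F); last by rewrite cA leq_pred.
rewrite cA Am; case: m {IH} Am cA => [|m] Am cA /=.
  have /cards0_eq E : #|A :\ a| = 0 by rewrite (cardsD1_in aA) Am.
  by move: bA; rewrite E inE.
by case: (odd _).
Qed.


Lemma Fon_conj A s g : s \in Fon A -> s ^ g \in Fon (g @: A).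
Proof.
move=> sF; apply/FonP => y; have -> : y = g (g^-1 y) by rewrite permKV.
set x := g^-1 y; rewrite permJ (mem_imset _ _ perm_inj) permJ !(inj_eq perm_inj).
case xA : (x \in A); first by have [-> -> _] := Fon_in sF xA; rewrite eqxx.
by rewrite (Fon_out sF) ?xA.
Qed.

Lemma fix_out_imset A g : (forall x, x \notin A -> g x = x) -> g @: A = A.
Proof.
move=> gA; apply/eqP; rewrite eqEcard card_imset ?leqnn ?andbT; last exact: perm_inj.
apply/subsetP=> _ /imsetP[x xA ->]; apply: contraT => gxA.
by move: (gA _ gxA) => /perm_inj e; move: gxA; rewrite e xA.
Qed.

Lemma Fon_trans A s u : s \in Fon A -> u \in Fon A ->
  exists2 g : {perm T}, (forall x, x \notin A -> g x = x) & s ^ g = u.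
Proof.
move: {2}#|A| (leqnn #|A|) => m; elim: m A s u => [|m IH] A s u.
  rewrite leqn0 => /eqP/cards0_eq ->; rewrite Fon0 !inE => /eqP -> /eqP ->.
  by exists 1 => [x _|]; rewrite ?perm1 ?conjg1.
rewrite leq_eqVlt ltnS => /orP[/eqP Am|]; last exact: IH.
move=> sF uF.
have [a aA] : exists a, a \in A by apply/set0Pn; rewrite -card_gt0 Am.
have [s1 s2 s3] := Fon_in sF aA; have [u1 u2 u3] := Fon_in uF aA.
set b := s a; set c := u a.
set t := tperm b c.
have ta : t a = a by rewrite tpermD // eq_sym.
have tA : forall x, x \notin A -> t x = x.
  by move=> x xA; rewrite tpermD //; apply: contraNneq xA => <-.
have uF1 : u ^ t \in Fon A by rewrite -[X in Fon X](fix_out_imset tA) Fon_conj.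
have u1a : (u ^ t) a = b by rewrite -{1}ta permJ tpermR.
have s'F := Fon_step sF aA; have u'F := Fon_step uF1 aA.
rewrite u1a in u'F.
have bA : b \in A :\ a by rewrite !inE s1 s3.
have cA : #|A :\ a :\ b| <= m by rewrite (cardsD1_in bA) (cardsD1_in aA) Am /= leq_pred.
have [g gA e] := IH _ _ _ cA s'F u'F.
have ga : g a = a by apply: gA; rewrite !inE eqxx andbF.
have gb : g b = b by apply: gA; rewrite !inE eqxx.
exists (g * t).
  move=> x xA; rewrite permM gA ?tA //; by rewrite !inE (negbTE xA) !andbF.
have es : s = (s * tperm a b) * tperm a b by rewrite -mulgA tperm2 mulg1.
have eu : u ^ t = (u ^ t * tperm a b) * tperm a b by rewrite -mulgA tperm2 mulg1.
move: e; rewrite -/b => e.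
have sg : s ^ g = u ^ t by rewrite {1}es conjMg e tpermJ ga gb -eu.
by rewrite conjgM sg -conjgM /t tperm2 conjg1.
Qed.

Definition J1 : {set {perm T}} := [set s : {perm T} | [exists c, s \in Fon (~: [set c])]].

Lemma J1P s : reflect (exists c, s \in Fon (~: [set c])) (s \in J1).
Proof. rewrite inE; exact: existsP. Qed.

Lemma imsetC1 g c : g @: (~: [set c]) = ~: [set g c].
Proof.
apply/setP=> y; rewrite -(permKV g y) (mem_imset _ _ perm_inj) !inE.
by rewrite (inj_eq perm_inj).
Qed.

Lemma J1_conj s g : s \in J1 -> s ^ g \in J1.
Proof. by case/J1P=> c sF; apply/J1P; exists (g c); rewrite -imsetC1 Fon_conj. Qed.

Lemma J1_conjE g : J1 :^ g = J1.
Proof.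
apply/setP=> s; rewrite mem_conjg; apply/idP/idP; last exact: J1_conj.
by move/(J1_conj g); rewrite conjgKV.
Qed.

Lemma Fon_uniq s c d : s \in Fon (~: [set c]) -> s \in Fon (~: [set d]) -> c = d.
Proof.
move=> sc sd; apply/eqP; apply: contraT => cd.
have dA : d \in ~: [set c] by rewrite !inE eq_sym.
have [h _ _] := Fon_in sc dA.
by rewrite (Fon_out sd) ?eqxx // !inE negbK in h.
Qed.

Lemma card_J1 : #|J1| = (#|T| * gF #|T|.-1)%N.
Proof.
have e : forall c, #|Fon (~: [set c])| = gF #|T|.-1 by move=> c; rewrite card_Fon cardsC1.
rewrite -sum1_card big_mkcond /=.
rewrite (eq_bigr (fun s => \sum_c (s \in Fon (~: [set c]) : nat)))%N; last first.
  move=> s _; case: (boolP (s \in J1)) => [/J1P[c sc]|sJ].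
    rewrite (bigD1 c) //= sc big1 // => d dc; apply/eqP; rewrite eqb0.
    by apply: contra dc => sd; rewrite (Fon_uniq sd sc).
  rewrite big1 // => c _; apply/eqP; rewrite eqb0; apply: contra sJ => sc.
  by apply/J1P; exists c.
rewrite exchange_big /= (eq_bigr (fun _ => gF #|T|.-1)) ?sum_nat_const //.
move=> c _; rewrite -(e c) -sum1_card [RHS]big_mkcond /=; apply: eq_bigr => s _.
by case: (s \in _).
Qed.

Lemma Fon_commute A s z : s \in Fon A -> z \in A -> s ^ tperm z (s z) = s.
Proof.
move=> sF zA; have [h1 h2 h3] := Fon_in sF zA.
apply/permP => y; rewrite -{1}(tpermK z (s z) y) permJ.
have [->|xz] := eqVneq y z; first by rewrite tpermL h2 tpermL.
have [->|xsz] := eqVneq y (s z); first by rewrite tpermR tpermR h2.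
have sy1 : s y != z by rewrite -{1}h2 (inj_eq perm_inj).
have sy2 : s y != s z by rewrite (inj_eq perm_inj).
rewrite [tperm z (s z) y]tpermD 1?eq_sym // tpermD // eq_sym //.
Qed.

End Fon.



Lemma card_setId_sum (T : finType) (X : {set T}) (P : pred T) :
  #|[set x in X | P x]| = (\sum_(x in X) (P x : nat))%N.
Proof.
rewrite -sum1_card big_mkcond [RHS]big_mkcond; apply: eq_bigr => x _.
by rewrite inE; case: (x \in X); case: (P x).
Qed.

Section CFix.
Variables (gT : finGroupType) (H G : {group gT}).

Lemma cfix_fixE x t : ((H :* x) :* t == H :* x) = (t \in H :^ x).
Proof.
rewrite -rcosetM mem_conjg /conjg invgK; apply/eqP/idP => [/rcoset_eqP|].
  by rewrite mem_rcoset mulgA.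
by move=> h; apply/rcoset_eqP; rewrite mem_rcoset -mulgA.
Qed.

Lemma rcoset_injg g : injective (fun C : {set gT} => C :* g).
Proof. by move=> C D /= e; rewrite -(rcoset1 C) -(mulgV g) rcosetM e -rcosetM mulgV rcoset1. Qed.

Lemma cfix_conj_le t g : g \in G -> cfix H G t <= cfix H G (t ^ g).
Proof.
move=> gG; rewrite /cfix -(card_imset _ (@rcoset_injg g)); apply: subset_leq_card.
apply/subsetP=> D /imsetP[C /setIdP[/rcosetsP[x xG ->] /eqP e] ->].
apply/setIdP; split.
  by apply/rcosetsP; exists (x * g); rewrite ?groupM ?rcosetM.
by rewrite -!rcosetM -conjgC mulgA !rcosetM e.
Qed.

Lemma cfix_conj t g : g \in G -> cfix H G (t ^ g) = cfix H G t.
Proof.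
move=> gG; apply/eqP; rewrite eqn_leq cfix_conj_le // andbT.
by rewrite -{2}(conjgK g t) cfix_conj_le ?groupV.
Qed.

Lemma sum_cfix (J : {set gT}) : (forall x, x \in G -> J :^ x = J) ->
  (\sum_(t in J) cfix H G t = #|G : H| * #|J :&: H|)%N.
Proof.
move=> JG; rewrite /cfix.
rewrite (eq_bigr (fun t => \sum_(C in rcosets H G) (C :* t == C) : nat)%N); last first.
  by move=> t _; rewrite card_setId_sum.
rewrite exchange_big /= -sum_nat_const; apply: eq_bigr => C /rcosetsP[x xG ->].
rewrite -card_setId_sum -(cardJg (J :&: H) x) conjIg (JG x xG); apply: eq_card => t.
by rewrite !inE cfix_fixE.
Qed.
End CFix.


Section Aff.
Variable p : nat.
Local Notation F := 'F_p.

Definition aff_fun (a b : F) (x : F) : F := ((if a == 0 then 1 else a) * x + b)%R.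
Lemma aff_inj a b : injective (aff_fun a b).
Proof.
move=> x y; rewrite /aff_fun => /addIr; apply: mulfI.
by case: ifP => // /negbT.
Qed.

Definition aff a b : {perm F} := perm (@aff_inj a b).

Lemma affE a b x : a != 0%R -> aff a b x = (a * x + b)%R.
Proof. by move=> a0; rewrite permE /aff_fun (negbTE a0). Qed.

Lemma AGL1P s : reflect (exists a b, a != 0%R /\ s = aff a b) (s \in AGL1 p).
Proof.
rewrite inE; apply: (iffP existsP) => [[a /existsP[b /andP[a0 /forallP h]]]|[a [b [a0 ->]]]].
  by exists a, b; split => //; apply/permP => x; rewrite affE //; apply/eqP/h.
by exists a; apply/existsP; exists b; rewrite a0; apply/forallP => x; rewrite affE.
Qed.

Lemma AGL1_group_set : group_set (AGL1 p).
Proof.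
apply/group_setP; split.
  apply/AGL1P; exists 1%R, 0%R; split; first exact: oner_neq0.
  by apply/permP => x; rewrite affE ?oner_neq0 // mul1r addr0 perm1.
move=> s t /AGL1P[a [b [a0 ->]]] /AGL1P[c [d [c0 ->]]]; apply/AGL1P.
exists (c * a)%R, (c * b + d)%R; split; first by rewrite mulf_neq0.
by apply/permP => x; rewrite permM !affE ?mulf_neq0 // mulrDr mulrA addrA.
Qed.

Canonical AGL1_group := Group AGL1_group_set.

Hypothesis pr : prime p.

Lemma card_AGL1 : #|AGL1 p| = (p.-1 * p)%N.
Proof.
have -> : AGL1 p = [set aff ab.1 ab.2 | ab in setX (~: [set 0%R]) [set: F]].
  apply/setP => s; apply/AGL1P/imsetP => [[a [b [a0 ->]]]|[[a b]]].
    by exists (a, b); rewrite // !inE a0.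
  by rewrite !inE andbT => a0 ->; exists a, b.
rewrite card_in_imset ?cardsX ?cardsC1 ?cardsT ?card_Fp //.
move=> [a b] [c d]; rewrite !inE !andbT /= => a0 c0 e.
have e0 := congr1 (fun f : {perm F} => f 0%R) e.
have e1 := congr1 (fun f : {perm F} => f 1%R) e.
move: e0 e1; rewrite /= !affE // !mulr0 !add0r !mulr1 => -> /addIr ->. done.
Qed.


Hypothesis p2 : 2 < p.

Lemma odd_p : odd p.
Proof. by case: (even_prime pr) => // e; move: p2; rewrite e. Qed.

Lemma card_F : #|F| = p. Proof. exact: card_Fp. Qed.

Lemma Fermat (x : F) : x != 0%R -> (x ^+ p.-1 = 1)%R.
Proof.
move=> x0; have : (x ^+ (p.-1).+1 = x)%R.
  by rewrite prednK ?prime_gt0 // -[X in (_ ^+ X)%R]card_F expf_card.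
rewrite exprS.
by move/(congr1 (fun y => x^-1 * y)%R); rewrite mulKf // mulVf.
Qed.

Lemma prim_root_ex : exists g : F, (p.-1).-primitive_root%R g.
Proof.
have h1 : 0 < p.-1 by rewrite -subn1 subn_gt0 prime_gt1.
have h2 : all (p.-1).-unity_root%R (enum (~: [set 0%R : F])).
  by apply/allP => x; rewrite mem_enum !inE unity_rootE => /Fermat ->.
have h4 : p.-1 <= size (enum (~: [set 0%R : F])) by rewrite -cardE cardsC1 card_F.
have /hasP[g _ gP] := has_prim_root h1 h2 (enum_uniq _) h4.
by exists g.
Qed.

Lemma odd_in_AGL1 : exists2 o, o \in AGL1 p & odd_perm o.
Proof.
have [g gP] := prim_root_ex.
have g0 : g != 0%R.
  apply/eqP => g0; have := prim_expr_order gP; rewrite g0 expr0n.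
  have -> : (p.-1 == 0%N) = false by rewrite -subn1 subn_eq0 leqNgt prime_gt1.
  by move/eqP; rewrite eq_sym oner_eq0.
exists (aff g 0%R); first by apply/AGL1P; exists g, 0%R.
have oX : forall i x, ((aff g 0%R) ^+ i) x = (g ^+ i * x)%R.
  move=> i x; rewrite permX; elim: i => [|i IH]; first by rewrite mul1r.
  by rewrite iterS IH affE // addr0 exprS mulrA.
have po0 : porbit (aff g 0%R) 0%R = [set 0%R].
  apply/setP=> y; rewrite inE; apply/porbitP/eqP => [[i ->]|->].
    by rewrite oX mulr0.
  by exists 0%N; rewrite expg0 perm1.
have pox : forall x, x != 0%R -> porbit (aff g 0%R) x = ~: [set 0%R].
  move=> x x0; apply/setP=> y; rewrite !inE; apply/porbitP/idP => [[i ->]|y0].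
    by rewrite oX mulf_neq0 // expf_neq0.
  have [i ei] := prim_rootP gP (Fermat (mulf_neq0 y0 (invr_neq0 x0))).
  by exists i; rewrite oX -ei mulfVK.
rewrite /odd_perm card_F.
have -> : porbits (aff g 0%R) = [set [set 0%R]; ~: [set 0%R]].
  apply/setP => C; rewrite !inE; apply/imsetP/orP => [[x _ ->]|[/eqP->|/eqP->]].
  - have [->|x0] := eqVneq x 0%R; first by rewrite po0; left.
    by rewrite pox //; right.
  - by exists 0%R.
  by exists 1%R => //; rewrite pox // oner_neq0.
rewrite cards2.
have -> : ([set 0%R : F] != ~: [set 0%R]).
  apply/eqP => /setP /(_ 0%R); by rewrite !inE eqxx.
by rewrite /= odd_p.
Qed.

Lemma card_AGL1_Alt : (#|AGL1 p :&: Alt F| * 2)%N = #|AGL1 p|.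
Proof.
have [o oA oodd] := odd_in_AGL1.
rewrite -(cardsID (Alt F) (AGL1 p)) muln2 -addnn; congr (_ + _).
apply/eqP; rewrite eqn_leq; apply/andP; split.
  rewrite -(card_imset (AGL1 p :&: Alt F) (@mulIg _ o)); apply: subset_leq_card.
  apply/subsetP=> y /imsetP[s /setIP[sA sE] ->].
  rewrite Alt_even in sE.
  by rewrite in_setD (groupM sA oA) !Alt_even odd_permM oodd (negbTE sE).
rewrite -(card_imset (AGL1 p :\: Alt F) (@mulIg _ o)); apply: subset_leq_card.
apply/subsetP=> y /imsetP[s /setDP[sA sE] ->].
rewrite Alt_even negbK in sE.
by rewrite in_setI (groupM sA oA) !Alt_even odd_permM oodd sE.
Qed.

Lemma two_neq0 : (2%:R : F)%R != 0%R.
Proof.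
apply/eqP => e; have := congr1 (fun x : F => nat_of_ord x) e.
by rewrite val_Fp_nat // modn_small.
Qed.

Lemma fix_m1 (b x : F) : ((- x + b)%R == x) = (x == b / 2%:R)%R.
Proof.
rewrite addrC subr_eq -mulr2n -[(x *+ 2)%R]mulr_natr.
by apply/eqP/eqP => [->|->]; rewrite ?mulfK ?divfK ?two_neq0.
Qed.

Lemma m1_neq0 : (-1 : F)%R != 0%R.
Proof. by rewrite oppr_eq0 oner_neq0. Qed.

Lemma aff_m1_J1 b : aff (-1)%R b \in J1 F.
Proof.
apply/J1P; exists (b / 2%:R)%R; apply/FonP => x; rewrite !inE !affE ?m1_neq0 //.
rewrite !mulN1r -fix_m1 opprD opprK addrNK eqxx andbT.
by case: (_ == _).
Qed.

Lemma AGL1_inv s : s \in AGL1 p -> (forall x, s (s x) = x) -> s != 1 ->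
  exists b, s = aff (-1)%R b.
Proof.
case/AGL1P => a [b [a0 ->]] inv s1; exists b.
have e0 := inv 0%R; have e1 := inv 1%R.
rewrite !affE // mulr0 add0r in e0; rewrite !affE // mulr1 in e1.
move: e1; rewrite mulrDr -addrA e0 addr0 => aa.
have : ((a - 1) * (a + 1) = 0)%R.
  have -> : ((a - 1) * (a + 1) = a * a - 1)%R by ring.
  by rewrite aa subrr.
move/eqP; rewrite mulf_eq0 => /orP[|].
  rewrite subr_eq0 => /eqP a1; rewrite a1 mul1r in e0.
  have b0 : b = 0%R.
    by apply/eqP; rewrite -(mulIr_eq0 _ (mulIf two_neq0)) mulr_natr mulr2n e0.
  by move: s1; rewrite a1 b0; case/eqP; apply/permP => x; rewrite affE ?oner_neq0 // mul1r addr0 perm1.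
by rewrite addr_eq0 => /eqP ->.
Qed.

Lemma J1_inv (s : {perm F}) : s \in J1 F -> (forall x, s (s x) = x) /\ s != 1.
Proof.
case/J1P => c sF; split.
  move=> x; have [->|xc] := eqVneq x c; first by rewrite !(Fon_out sF) // !inE eqxx.
  by have [] := Fon_in sF (_ : x \in ~: [set c]); rewrite // !inE xc.
apply/eqP => s1; have cA : (c + 1)%R \in ~: [set c].
  by rewrite !inE -subr_eq0 addrAC subrr add0r oner_neq0.
by have [] := Fon_in sF cA; rewrite s1 perm1 eqxx.
Qed.

Lemma J1_AGL1 : J1 F :&: AGL1 p = [set aff (-1)%R b | b : F].
Proof.
apply/setP => s; apply/setIP/imsetP => [[sJ sA]|[b _ ->]].
  have [inv s1] := J1_inv sJ; have [b ->] := AGL1_inv sA inv s1; by exists b.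
by split; [exact: aff_m1_J1 | apply/AGL1P; exists (-1)%R, b; rewrite m1_neq0].
Qed.

Lemma card_J1_AGL1 : #|J1 F :&: AGL1 p| = p.
Proof.
rewrite J1_AGL1 card_imset ?card_F // => b c e.
have := congr1 (fun f : {perm F} => f 0%R) e; by rewrite /= !affE ?m1_neq0 // !mulr0 !add0r.
Qed.

Lemma J1_Alt : (p %% 4 = 1)%N -> J1 F \subset Alt F.
Proof.
move=> p4; apply/subsetP => s /J1P[c sF]; rewrite Alt_even (odd_Fon sF) cardsC1 card_F.
have -> : p.-1 = ((p %/ 4) * 2).*2.
  by rewrite {1}(divn_eq p 4) p4 addn1 /= -muln2 -mulnA.
by rewrite doubleK oddM andbF.
Qed.

End Aff.


Lemma Sym_all p (s : {perm 'F_p}) : s \in Sym 'F_p.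
Proof. by rewrite inE. Qed.

Lemma card_SymF p : prime p -> #|Sym 'F_p| = p`!.
Proof. by move=> pr; rewrite card_Sym card_Fp. Qed.

Lemma gF_even k : (gF k.*2 * (2 ^ k * k`!))%N = (k.*2)`!.
Proof.
elim: k => [//|k IH]; rewrite doubleS /= !factS -IH expnS.
rewrite -!mul2n; ring.
Qed.

Lemma sq_bound k : ((2 ^ k * k`!) ^ 2 <= (k.*2).+1`!)%N.
Proof.
elim: k => [//|k IH].
have -> : ((2 ^ k.+1 * k.+1`!) ^ 2 = (k.*2.+2 * k.*2.+2) * (2 ^ k * k`!) ^ 2)%N.
  by rewrite [(2 ^ k.+1)%N]expnS factS -[k.*2]mul2n -addn2 -[k.+1]addn1; ring.
rewrite doubleS [(k.*2.+3)`!]factS [(k.*2.+2)`!]factS mulnA.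
by rewrite leq_mul // leq_mul.
Qed.

Section Main.
Variable p : nat.
Hypotheses (pr : prime p) (p2 : 2 < p).
Local Notation F := 'F_p.
Definition t0 : {perm F} := @aff p (-1)%R 0%R.

Lemma conj_to_t0 (t : {perm F}) : t \in J1 F -> exists2 h, h \in Alt F & t ^ h = t0.
Proof.
case/J1P => c tF.
have /J1P[c0 t0F] := aff_m1_J1 pr p2 0%R.
set tau := tperm c c0.
have t1F : t ^ tau \in Fon (~: [set c0]) by rewrite -(tpermL c c0) -imsetC1 Fon_conj.
have [g _ e] := Fon_trans t1F t0F.
have e' : t ^ (tau * g) = t0 by rewrite conjgM.
case: (boolP (odd_perm (tau * g))) => od; last by exists (tau * g); rewrite ?Alt_even.
have zA : (c0 + 1)%R \in ~: [set c0].
  by rewrite !inE -subr_eq0 addrAC subrr add0r oner_neq0.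
have [z1 _ _] := Fon_in t0F zA.
exists (tau * g * tperm (c0 + 1)%R (t0 (c0 + 1)%R)).
  by rewrite Alt_even odd_permM od odd_tperm eq_sym z1.
by rewrite conjgM e' (Fon_commute t0F zA).
Qed.

Lemma J1_order2 (t : {perm F}) : t \in J1 F -> #[t] = 2.
Proof.
move=> tJ; have [inv t1] := J1_inv tJ.
have t2 : t ^+ 2 = 1 by apply/permP => x; rewrite expgS expg1 permM inv perm1.
have hd : (#[t] %| 2)%N by rewrite order_dvdn t2.
have n1 : #[t] != 1%N by rewrite order_eq1.
move: (dvdn_leq (isT : (0 < 2)%N) hd) (order_gt0 t) n1.
by case: #[t] => [|[|[|]]].
Qed.
End Main.

Local Close Scope group_scope.

Theorem mainTheorem10 (p : nat) (G : {group {perm 'F_p}}) :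
  prime p -> p %% 4 = 1 ->
  (G :=: Alt 'F_p \/ G :=: Sym 'F_p) ->
  maximal (AGL1 p :&: G) G ->
  let H := AGL1 p :&: G in
  let n := (#|G : H|)%g in
  let T := Alt 'F_p in
  n = (p - 2)`! /\
  ((ifix H G T)%:Q = (2 ^ ((p - 1) %/ 2) * ((p - 1) %/ 2)`!)%N%:Q / (p - 1)%N%:Q)%R /\
  1 <= ifix H G T /\ ifix H G T ^ 2 <= n.
Proof.
move=> pr p4 hG _ H n T.
have p5 : (4 < p)%N by have := prime_gt1 pr; lia.
have p2 : (2 < p)%N by apply: ltn_trans p5.
have [j pj] : exists j, p = (j.+1).*2.+1.
  by exists ((p %/ 4) * 2).-1; lia.
have pk : ((p - 1) %/ 2)%N = j.+1 by rewrite pj; lia.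
have AG : Alt 'F_p \subset G.
  by case: hG => ->; [exact: subxx | apply/subsetP => s _; exact: Sym_all].
have JG := subset_trans (J1_Alt pr p4) AG.
have HG : H \subset G := subsetIr _ _.
have hfact : p`! = (p.-1 * p * (p - 2)`!)%N.
  rewrite pj. have -> : ((j.+1).*2.+1 - 2 = j.*2.+1)%N by lia.
  by rewrite doubleS !factS /= mulnA (mulnC j.*2.+3).
have hn : n = (p - 2)`!.
  have L' : (#|H| * n = #|G|)%N := Lagrange HG.
  have nz : (0 < p.-1 * p)%N by rewrite muln_gt0 andbC prime_gt0 // -subn1 subn_gt0 prime_gt1.
  case: hG => eG.
    have cH : (#|H| * 2 = p.-1 * p)%N by rewrite /H eG card_AGL1_Alt // card_AGL1.
    have cG : (2 * #|G| = p`!)%N.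
      by rewrite eG card_Alt card_Fp // prime_gt1.
    apply/eqP; rewrite -(eqn_pmul2l nz) -hfact -cG -L' -cH.
    by rewrite mulnA (mulnC 2) mulnAC.
  have cH : #|H| = (p.-1 * p)%N.
    by rewrite /H eG (setIidPl _) ?card_AGL1 //; apply/subsetP => s _; exact: Sym_all.
  have cG : #|G| = p`! by rewrite eG card_SymF.
  apply/eqP; rewrite -(eqn_pmul2l nz) -hfact -cG -L' cH //.
set c0 := cfix H G (t0 p).
have cst : forall t, t \in J1 'F_p -> cfix H G t = c0.
  move=> t /(conj_to_t0 pr p2) [h hA e]; rewrite /c0 -e cfix_conj //; exact: (subsetP AG).
have S := @sum_cfix _ (AGL1_group p :&: G)%G G (J1 'F_p) (fun x _ => J1_conjE x).
have JH : #|J1 'F_p :&: H| = p.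
  rewrite /H setIA (setIidPl _) ?card_J1_AGL1 //.
  exact: subset_trans (subsetIl _ _) JG.
move: S; rewrite JH (eq_bigr (fun _ => c0)) // sum_nat_const card_J1 card_Fp //.
rewrite -/n hn => hc0.
have hc : (gF p.-1 * c0 = (p-2)`!)%N.
  by apply/eqP; rewrite -(eqn_pmul2l (prime_gt0 pr)) mulnA hc0 mulnC.
have hc2 : (c0 * (j.+1).*2 = 2 ^ j.+1 * j.+1`!)%N.
  have e1 := gF_even j.+1.
  have e2 : p.-1 = (j.+1).*2 by rewrite pj.
  have e3 : (p - 2 = j.*2.+1)%N by rewrite pj; lia.
  rewrite e2 e3 in hc.
  have e4 : (((j.+1).*2)`! = (j.+1).*2 * (j.*2.+1)`!)%N by rewrite doubleS factS.
  rewrite e4 -hc in e1.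
  have g0 : (0 < gF (j.+1).*2)%N.
    rewrite lt0n; apply/eqP => g0; move: hc; rewrite g0 mul0n => /esym hf; by move: (fact_gt0 (j.*2.+1)); rewrite hf.
  apply/eqP; rewrite -(eqn_pmul2l g0) e1 doubleS; apply/eqP; ring.
have hifix : ifix H G T = c0.
  apply/eqP; rewrite eqn_leq; apply/andP; split.
    apply/bigmax_leqP => t /andP[tT /eqP t2].
    case: (posnP (cfix H G t)) => [->//|]; rewrite /cfix card_gt0.
    case/set0Pn => C /setIdP[/rcosetsP[x xG ->]].
    rewrite (cfix_fixE (AGL1_group p :&: G)%G) mem_conjg => uH.
    have [uA _] := setIP uH.
    set u := (t ^ x^-1)%g in uH uA.
    have u2 : #[u]%g = 2 by rewrite /u orderJ.
    have uinv : forall y, u (u y) = y.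
      by move=> y; rewrite -[u (u y)]/(iter 2 u y) -permX -u2 expg_order perm1.
    have u1 : (u != 1)%g by apply: contra_eqN u2 => /eqP ->; rewrite order1.
    have [b ub] := AGL1_inv pr p2 uA uinv u1.
    have uJ : u \in J1 'F_p by rewrite ub aff_m1_J1.
    have tJ : t \in J1 'F_p by rewrite -(conjgKV x t) J1_conj.
    by rewrite -/(cfix H G t) (cst t tJ).
  have t0J : t0 p \in J1 'F_p by exact: aff_m1_J1.
  apply: (@leq_bigmax_cond _ _ (fun t => cfix H G t) (t0 p)).
  by rewrite (subsetP (J1_Alt pr p4)) // (J1_order2 t0J) eqxx.
have c0e : c0 = (2 ^ j * j`!)%N.
  apply/eqP; rewrite -(eqn_pmul2r (_ : (0 < (j.+1).*2)%N)) // hc2.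
  by rewrite expnS factS; apply/eqP; rewrite -mul2n; ring.
have c0pos : (0 < c0)%N by rewrite c0e muln_gt0 expn_gt0 fact_gt0.
rewrite hifix; split => //; split.
  rewrite pk -hc2 (_ : (p - 1)%N = (j.+1).*2); last by rewrite pj; lia.
  by rewrite PoszM intrM mulfK // intr_eq0.
split => //.
rewrite c0e; have -> : (p - 2 = j.*2.+1)%N by rewrite pj; lia.
exact: sq_bound.
Qed.
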